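(* Let $\mathfrak m,\mathfrak m^*$ be complex-valued functions on the edges of the lattice strip and let $\phi=\int_{\gamma_0}\big(\mathfrak m(z)\psi(z)\,dz+\mathfrak m^*(z)\psi^*(z)\,d\bar z\big)$. Then its Hilbert space adjoint is $$\phi^\dagger=\int_{\gamma_0}\big(-\overline{\mathfrak m(z)}\,\psi(z)\,dz+\overline{\mathfrak m^*(z)}\,\psi^*(z)\,d\bar z\big).$$
   Context: Fix integers $a<0<b$, $C=\{a,\dots,b\}$, $C^*=\{a+\frac12,\dots,b-\frac12\}$. $\tilde V$ is the complex inner product space with orthonormal basis $(e_\rho)_{\rho\in\{\pm1\}^C}$, and $\dagger$ is the Hilbert space adjoint. For $x'\in C^*$, $\varsigma_{x'}(\rho)$ flips the signs of $\rho_x$ for $x<x'$; $\psi_{x'}e_\rho=\frac{-\rho_{x'-1/2}+i\rho_{x'+1/2}}{\sqrt2}e_{\varsigma_{x'}(\rho)}$, $\psi^*_{x'}e_\rho=\frac{-i\rho_{x'-1/2}+\rho_{x'+1/2}}{\sqrt2}e_{\varsigma_{x'}(\rho)}$. The lattice strip has vertices $C\times\mathbb Z\subset\mathbb C$ and nearest-neighbour edges identified with their midpoints; on the horizontal edges $x'\in C^*$ at height $0$ the fermions are $\psi(x')=\psi_{x'}$, $\psi^*(x')=\psi^*_{x'}$. The contour $\gamma_0=(a,a+1,\dots,b)$ crosses the strip at height $0$, and for a contour $(w_0,\dots,w_m)$ with $z_j$ the edge joining $w_{j-1},w_j$, $\int(\mathfrak m\psi\,dz+\mathfrak m^*\psi^*\,d\bar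 z)=\sum_j(\mathfrak m(z_j)\psi(z_j)(w_j-w_{j-1})+\mathfrak m^*(z_j)\psi^*(z_j)\overline{(w_j-w_{j-1})})$. *)

(* Defs.v *)
(* Complex scalars: any numClosedFieldType K (e.g. algC, or
   complex R for R : rcfType), with imaginary unit 'i, conjugation ^*, sqrtC. *)
From mathcomp Require Import all_boot all_order all_algebra.
Set Implicit Arguments. Unset Strict Implicit. Unset Printing Implicit Defensive.
Import Order.TTheory GRing.Theory Num.Theory.
Local Open Scope ring_scope.

(* C = {a,...,b} is indexed by 'I_(nsites a b); site i <-> integer a + i *)
Definition nsites (a b : int) : nat := `|b - a|%N.+1.
Definition pos (a b : int) (i : 'I_(nsites a b)) : int := a + (i : nat)%:Z.

(* spin configurations rho in {+1,-1}^C ; true = +1, false = -1 *)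
Notation config a b := {ffun 'I_(nsites a b) -> bool}.
(* the space V~ : functions config -> K, i.e. coordinates in the basis e_rho *)
Notation Vt K a b := {ffun config a b -> K}.

Definition spin (K : numClosedFieldType) (s : bool) : K := if s then 1 else -1.
Definition rho_at (K : numClosedFieldType) (a b : int) (rho : config a b) (x : int) : K :=
  \sum_(i : 'I_(nsites a b) | pos i == x) spin K (rho i).

Definition ebasis (K : numClosedFieldType) (a b : int) (rho : config a b) : Vt K a b :=
  [ffun s => (s == rho)%:R].
Definition vscale (K : numClosedFieldType) (a b : int) (c : K) (v : Vt K a b) : Vt K a b :=
  [ffun s => c * v s].
Definition inner (K : numClosedFieldType) (a b : int) (u v : Vt K a b) : K :=
  \sum_rho (u rho)^* * v rho.

Definition adjoint_of (K : numClosedFieldType) (a b : int) (A B : Vt K a b -> Vt K a b) : Prop :=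
  forall u v, inner u (A v) = inner (B u) v.

(* x' = k + 1/2 in C^* is encoded by the integer k.
   varsigma_{x'} flips rho_x for x < x', i.e. x <= k *)
Definition varsigma (a b : int) (k : int) (rho : config a b) : config a b :=
  [ffun i => if pos i <= k then ~~ rho i else rho i].

Definition psi (K : numClosedFieldType) (a b : int) (k : int) (v : Vt K a b) : Vt K a b :=
  \sum_rho vscale (v rho * ((- rho_at K rho k + 'i * rho_at K rho (k + 1)) / sqrtC 2))
                  (ebasis K (varsigma k rho)).
Definition psis (K : numClosedFieldType) (a b : int) (k : int) (v : Vt K a b) : Vt K a b :=
  \sum_rho vscale (v rho * ((- 'i * rho_at K rho k + rho_at K rho (k + 1)) / sqrtC 2))
                  (ebasis K (varsigma k rho)).

(* Edges of the lattice Z x Z (containing the strip C x Z):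
   hedge x y joins x+iy and (x+1)+iy (midpoint x+1/2+iy);
   vedge x y joins x+iy and x+i(y+1). *)
Inductive edge := hedge of int & int | vedge of int & int.

(* Discrete contour integral  \int (m psi dz + ms psi* dzbar)  along a contour
   (w_0,...,w_m) whose vertices lie at height 0 (w_j = x_j, integers, consecutive
   ones adjacent).  The edge z_j joining w_{j-1}, w_j is hedge (min) 0, where
   psi(z_j) = psi_{min+1/2}, psi*(z_j) = psi*_{min+1/2}; w_j - w_{j-1} is real. *)
Definition contour_int (K : numClosedFieldType) (a b : int) (m ms : edge -> K)
    (w : seq int) (v : Vt K a b) : Vt K a b :=
  \sum_(pq <- zip w (behead w))
    let k := Num.min pq.1 pq.2 in
    let d : K := (pq.2 - pq.1)%:~R in
    vscale (m (hedge k 0) * d) (psi k v) + vscale (ms (hedge k 0) * d^*) (psis k v).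

Definition gamma0 (a b : int) : seq int := [seq a + (i%:Z) | i <- iota 0 (`|b - a|%N.+1)].

(* Main.v *)
Require Import Defs.
From mathcomp Require Import all_boot all_order all_algebra.
From mathcomp Require Import zify ring.
Import Order.TTheory GRing.Theory Num.Theory.
Local Open Scope ring_scope.

Section Aux.
Variables (K : numClosedFieldType) (a b : int).

Lemma varsigmaK k : involutive (@varsigma a b k).
Proof. by move=> r; apply/ffunP=> i; rewrite !ffunE; case: ifP => H; rewrite H ?negbK. Qed.

Lemma spinN s : spin K (~~ s) = - spin K s.
Proof. by case: s; rewrite /spin ?opprK. Qed.

Lemma spin_conj s : (spin K s)^* = spin K s.
Proof. by case: s; rewrite /spin ?conjC1 ?conjCN1. Qed.

Lemma rho_at_conj (r : config a b) x : (rho_at K r x)^* = rho_at K r x.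
Proof. by rewrite /rho_at rmorph_sum; apply: eq_bigr => i _; exact: spin_conj. Qed.

Lemma rho_at_sk (r : config a b) k : rho_at K (varsigma k r) k = - rho_at K r k.
Proof.
rewrite /rho_at -sumrN; apply: eq_bigr => i /eqP Hi.
by rewrite ffunE Hi lexx spinN.
Qed.

Lemma rho_at_sk1 (r : config a b) k : rho_at K (varsigma k r) (k + 1) = rho_at K r (k + 1).
Proof.
rewrite /rho_at; apply: eq_bigr => i /eqP Hi.
rewrite ffunE Hi; case: ifP => // H; exfalso; move: H; lia.
Qed.

Lemma sqrt2_conj : (sqrtC (2 : K))^* = sqrtC 2.
Proof. by apply: geC0_conj; rewrite sqrtC_ge0 ler0n. Qed.

Definition cpsi k (r : config a b) : K :=
  (- rho_at K r k + 'i * rho_at K r (k + 1)) / sqrtC 2.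
Definition cpsis k (r : config a b) : K :=
  (- 'i * rho_at K r k + rho_at K r (k + 1)) / sqrtC 2.

Lemma gen_opE (c : config a b -> K) k (v : Vt K a b) s :
  (\sum_rho vscale (v rho * c rho) (ebasis K (varsigma k rho))) s =
  v (varsigma k s) * c (varsigma k s).
Proof.
rewrite sum_ffunE (bigD1 (varsigma k s)) //= big1 ?addr0.
  by rewrite !ffunE varsigmaK eqxx mulr1.
move=> r Hr; rewrite !ffunE; case: eqP; last by rewrite mulr0.
by move=> Es; move: Hr; rewrite Es varsigmaK eqxx.
Qed.

Lemma inner_gen (c : config a b -> K) k (u v : Vt K a b) :
  inner u (\sum_rho vscale (v rho * c rho) (ebasis K (varsigma k rho))) =
  \sum_t (u (varsigma k t))^* * (v t * c t).
Proof.
rewrite /inner (reindex_inj (inv_inj (varsigmaK k))) /=.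
by apply: eq_bigr => t _; rewrite gen_opE varsigmaK.
Qed.

Lemma inner_gen' (c : config a b -> K) k (u v : Vt K a b) :
  inner (\sum_rho vscale (u rho * c rho) (ebasis K (varsigma k rho))) v =
  \sum_t (u (varsigma k t) * c (varsigma k t))^* * v t.
Proof. by rewrite /inner; apply: eq_bigr => t _; rewrite gen_opE. Qed.

Lemma psi_adj k (u v : Vt K a b) : inner u (psi k v) = - inner (psi k u) v.
Proof.
rewrite /psi -/(cpsi k) inner_gen inner_gen' -sumrN; apply: eq_bigr => t _.
rewrite /cpsi rho_at_sk rho_at_sk1 !rmorphM /= fmorphV /= rmorphD rmorphN /= rmorphM /=.
rewrite conjCi sqrt2_conj ?rmorphN /= !rho_at_conj; ring.
Qed.

Lemma psis_adj k (u v : Vt K a b) : inner u (psis k v) = inner (psis k u) v.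
Proof.
rewrite /psis -/(cpsis k) inner_gen inner_gen'; apply: eq_bigr => t _.
rewrite /cpsis rho_at_sk rho_at_sk1 !rmorphM /= fmorphV /= rmorphD /= rmorphM /= rmorphN /=.
rewrite conjCi sqrt2_conj ?rmorphN /= !rho_at_conj; ring.
Qed.

Lemma inner_addr (u v1 v2 : Vt K a b) : inner u (v1 + v2) = inner u v1 + inner u v2.
Proof. by rewrite /inner -big_split; apply: eq_bigr => r _; rewrite ffunE mulrDr. Qed.
Lemma inner_addl (u1 u2 v : Vt K a b) : inner (u1 + u2) v = inner u1 v + inner u2 v.
Proof. by rewrite /inner -big_split; apply: eq_bigr => r _; rewrite ffunE rmorphD mulrDl. Qed.
Lemma inner_sclr c (u v : Vt K a b) : inner u (vscale c v) = c * inner u v.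
Proof. by rewrite /inner mulr_sumr; apply: eq_bigr => r _; rewrite ffunE; ring. Qed.
Lemma inner_scll c (u v : Vt K a b) : inner (vscale c u) v = c^* * inner u v.
Proof. by rewrite /inner mulr_sumr; apply: eq_bigr => r _; rewrite ffunE rmorphM; ring. Qed.
Lemma inner_sumr (I : Type) (s : seq I) (F : I -> Vt K a b) u :
  inner u (\sum_(i <- s) F i) = \sum_(i <- s) inner u (F i).
Proof.
elim: s => [|x s IH]; first by rewrite !big_nil /inner big1 // => r _; rewrite ffunE mulr0.
by rewrite !big_cons inner_addr IH.
Qed.
Lemma inner_suml (I : Type) (s : seq I) (F : I -> Vt K a b) v :
  inner (\sum_(i <- s) F i) v = \sum_(i <- s) inner (F i) v.
Proof.
elim: s => [|x s IH]; first by rewrite !big_nil /inner big1 // => r _; rewrite ffunE rmorph0 mul0r.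
by rewrite !big_cons inner_addl IH.
Qed.

End Aux.

Theorem proposition3p11 (K : numClosedFieldType) (a b : int)
    (ha : a < 0) (hb : 0 < b) (m ms : edge -> K) :
  adjoint_of
    (@contour_int K a b m ms (gamma0 a b))
    (@contour_int K a b (fun z => - (m z)^*) (fun z => (ms z)^*) (gamma0 a b)).
Proof.
move=> u v; rewrite /contour_int inner_sumr inner_suml; apply: eq_bigr => pq _ /=.
rewrite inner_addr inner_addl !inner_sclr !inner_scll psi_adj psis_adj.
rewrite !rmorphM /= rmorphN /= !conjCK !rmorph_int; ring.
Qed.
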